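(* Let $d$ be a prime and $\omega=e^{2\pi i/d}$. For each $l\in\{0,1,\dots,d-1\}$ (identified with $\mathbb{Z}_d$) choose $\theta(l)\in U(1)$ with $\theta(l)^d=\omega^l$ (for instance $\theta(l)=e^{2\pi i l/d^2}$), and define the unitary $M(l)$ on $\mathbb{C}^d$ by $M(l)|q\rangle=\theta(l)\,\omega^{l q^{d-1}}|q+1\rangle$ for $q\in\{0,\dots,d-1\}$ (addition in $q+1$ modulo $d$). Let $|\psi\rangle=\frac{1}{\sqrt d}\sum_{q=0}^{d-1}|q\rangle\otimes|q\rangle\otimes|q\rangle$. For an input $\mathbf{i}=(i_1,i_2)\in\mathbb{Z}_d^2$ set $l_1(\mathbf{i})=i_1$, $l_2(\mathbf{i})=i_2$, $l_3(\mathbf{i})=-i_1-i_2$ (in $\mathbb{Z}_d$), and consider the deterministic, non-adaptive measurement-based computation with $\mathbb{Z}_d$-linear side-processing in which, on input $\mathbf{i}$, the operator $M(l_1(\mathbf{i}))\otimes M(l_2(\mathbf{i}))\otimes M(l_3(\mathbf{i}))$ is measured on $|\psi\rangle$, with output $o(\mathbf{i})\in\mathbb{Z}_d$ determined by $M(l_1(\mathbf{i}))\otimes M(l_2(\mathbf{i}))\otimes M(l_3(\mathbf{i}))|\psi\rangle=\omega^{o(\mathbf{i})}|\psi\rangle$. Then this computation is contextual: there exist no functions $m_1,m_2,m_3:\mathbb{Z}_d\to\mathbb{Z}_d$ such that $o(\mathbf{i})=m_1(l_1(\mathbf{i}))+m_2(l_2(\mathbf{i}))+m_3(l_3(\mathbf{i}))\bmod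 d$ for all $\mathbf{i}\in\mathbb{Z}_d^2$.
   Context: The state $|\psi\rangle$ is a common eigenvector of all the operators $M(l_1(\mathbf{i}))\otimes M(l_2(\mathbf{i}))\otimes M(l_3(\mathbf{i}))$, with eigenvalues that are $d$-th roots of unity, so $o:\mathbb{Z}_d^2\to\mathbb{Z}_d$ is well defined and the computation is deterministic. A (deterministic) noncontextual hidden variable model for the computation is an assignment of outcomes $m_k(l)\in\mathbb{Z}_d$ to each local measurement $M(l)$ on qudit $k$, independent of the input, such that the output equals the sum modulo $d$ of the local outcomes of the measurements performed; the computation is called contextual if no such model exists. *)

(* Defs.v *)
From mathcomp Require Import all_boot all_order all_algebra.
From mathcomp Require Import algC.
Set Implicit Arguments. Unset Strict Implicit. Unset Printing Implicit Defensive.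
Import Order.TTheory GRing.Theory Num.Theory.
Local Open Scope ring_scope.

(* omega = e^{2 pi i / d}: d.-root (-1) is the d-th root of -1 of minimal
   nonnegative argument, i.e. e^{i pi / d}; its square is e^{2 pi i / d}. *)
Definition omega (d : nat) : algC := (d.-root (-1)) ^+ 2.

(* Matrix entries <a| M(l) |q> of the qudit operator
   M(l)|q> = theta(l) omega^{l q^{d-1}} |q+1>,  with arithmetic in Z_d. *)
Definition Mop (d : nat) (theta : 'Z_d -> algC) (l : 'Z_d) (a q : 'Z_d) : algC :=
  if a == q + 1 then theta l * omega d ^+ (nat_of_ord (l * q ^+ d.-1)) else 0.

Definition state3 (d : nat) := 'Z_d -> 'Z_d -> 'Z_d -> algC.

Definition psi (d : nat) : state3 d :=
  fun q1 q2 q3 => if (q1 == q2) && (q2 == q3) then (sqrtC d%:R)^-1 else 0.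

Definition tens3 (d : nat) (A B C : 'Z_d -> 'Z_d -> algC) (v : state3 d) : state3 d :=
  fun a b c => \sum_(q1 : 'Z_d) \sum_(q2 : 'Z_d) \sum_(q3 : 'Z_d)
                 A a q1 * B b q2 * C c q3 * v q1 q2 q3.

Definition l1 (d : nat) (i : 'Z_d * 'Z_d) : 'Z_d := i.1.
Definition l2 (d : nat) (i : 'Z_d * 'Z_d) : 'Z_d := i.2.
Definition l3 (d : nat) (i : 'Z_d * 'Z_d) : 'Z_d := - i.1 - i.2.

Definition is_output (d : nat) (theta : 'Z_d -> algC) (o : 'Z_d * 'Z_d -> 'Z_d) : Prop :=
  forall (i : 'Z_d * 'Z_d) (a b c : 'Z_d),
    tens3 (Mop theta (l1 i)) (Mop theta (l2 i)) (Mop theta (l3 i)) (@psi d) a b c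
    = omega d ^+ (nat_of_ord (o i)) * @psi d a b c.

Definition has_ncHVM (d : nat) (o : 'Z_d * 'Z_d -> 'Z_d) : Prop :=
  exists m1 m2 m3 : 'Z_d -> 'Z_d,
    forall i : 'Z_d * 'Z_d, o i = m1 (l1 i) + m2 (l2 i) + m3 (l3 i).

(* Main.v *)
Require Import Defs.
From mathcomp Require Import all_boot all_order all_algebra.
From mathcomp Require Import algC cyclotomic ring.
Import Order.TTheory GRing.Theory Num.Theory.
Local Open Scope ring_scope.

Section S.
Variable d : nat.
Hypothesis d_prime : prime d.

Lemma d_gt1 : (1 < d)%N. Proof. exact: prime_gt1. Qed.
Lemma Zd_cast : (Zp_trunc d).+2 = d. Proof. exact: Zp_cast d_gt1. Qed.

Lemma omega_prim : d.-primitive_root (omega d).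
Proof.
have d0 : (0 < d)%N by apply: ltnW d_gt1.
have [z zP] := C_prim_root_exists d0.
have od : omega d ^+ d = 1.
  by rewrite /omega -exprM mulnC exprM rootCK // expr2 mulrNN mulr1.
have [i Hi] := prim_rootP zP od.
have o1 : omega d != 1.
  apply/negP => /eqP H.
  have : (d.-root (-1 : algC) - 1) * (d.-root (-1) + 1) = 0.
    by rewrite mulrDr mulr1 mulrBl mul1r -expr2 -/(omega d) H addrA subrK subrr.
  move/eqP; rewrite mulf_eq0 => /orP [|].
    rewrite subr_eq0 => /eqP H1.
    have := @rootCK algC d d0 (-1); rewrite /= H1 expr1n => /eqP.
    move=> /eqP H2; have := @ltr01 algC; by rewrite H2 oppr_gt0 ltr10.
  rewrite addr_eq0 => /eqP H1.
  have := @rootC_lt0 algC d (-1) d_gt1; rewrite H1 ltrN10 //.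
have i0 : i != 0%N :> nat.
  by apply: contra o1 => /eqP i0; rewrite Hi i0 expr0.
have := exp_prim_root zP i; rewrite -Hi.
have -> : gcdn i d = 1%N.
  apply/eqP; rewrite gcdnC -/(coprime d i) prime_coprime //.
  apply/negP => /dvdn_leq; rewrite lt0n i0 => /(_ isT).
  by rewrite leqNgt ltn_ord.
by rewrite divn1.
Qed.


Definition E (z : 'Z_d) : algC := omega d ^+ (nat_of_ord z).

Lemma E_mod n : omega d ^+ (n %% d) = omega d ^+ n.
Proof. exact: prim_expr_mod omega_prim n. Qed.

Lemma E_add a b : E (a + b) = E a * E b.
Proof.
have h m : (m %% (Zp_trunc d).+2 = m %% d)%N by rewrite Zd_cast.
by rewrite /E -exprD /= h E_mod.
Qed.

Lemma E0 : E 0 = 1. Proof. by rewrite /E expr0. Qed.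

Lemma E_pow x : E x ^+ d = 1.
Proof. by rewrite /E -exprM mulnC exprM (prim_expr_order omega_prim) expr1n. Qed.

Lemma E1 : E 1 != E 0.
Proof.
have v1 : nat_of_ord (1 : 'Z_d) = 1%N by [].
rewrite E0 /E v1 expr1; apply/negP => /eqP H.
have := prim_order_dvd omega_prim 1; rewrite expr1 H eqxx dvdn1 => /eqP d1.
by have := d_gt1; rewrite d1.
Qed.

Lemma sum_delta (a : 'Z_d) (f : 'Z_d -> algC) :
  (forall q, q != a -> f q = 0) -> \sum_q f q = f a.
Proof. by move=> H; rewrite (bigD1 a) //= big1 ?addr0 // => q /H. Qed.

Lemma Mop0 theta l (a q : 'Z_d) : q != a - 1 -> Mop theta l a q = 0.
Proof. by move=> Hq; rewrite /Mop -subr_eq eq_sym (negbTE Hq). Qed.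

Lemma tens_eig theta (la lb lc : 'Z_d) a b c : la + lb + lc = 0 ->
  tens3 (Mop theta la) (Mop theta lb) (Mop theta lc) (@psi d) a b c
  = theta la * theta lb * theta lc * psi a b c.
Proof.
move=> Hl; rewrite /tens3 (@sum_delta (a - 1)); last first.
  by move=> q1 Hq; apply: big1 => q2 _; apply: big1 => q3 _; rewrite Mop0 // !mul0r.
rewrite (@sum_delta (b - 1)); last first.
  by move=> q2 Hq; apply: big1 => q3 _; rewrite (Mop0 _ _ _ _ Hq) mulr0 !mul0r.
rewrite (@sum_delta (c - 1)); last first.
  by move=> q3 Hq; rewrite (Mop0 _ _ _ _ Hq) mulr0 mul0r.
rewrite /Mop !subrK !eqxx /psi !(can_eq (subrK 1)).
have [/andP[/eqP<- /eqP<-]|H] := boolP ((a == b) && (b == c)); last first.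
  by rewrite !mulr0.
set q := (a - 1) ^+ d.-1.
have key : E (la * q) * E (lb * q) * E (lc * q) = 1.
  by rewrite -!E_add -!mulrDl Hl mul0r E0.
rewrite -!/(E _).
transitivity (theta la * theta lb * theta lc *
  (E (la * q) * E (lb * q) * E (lc * q)) * (sqrtC d%:R)^-1).
  by ring.
by rewrite key mulr1.
Qed.

End S.

Theorem theorem1 (d : nat) (d_prime : prime d) (theta : 'Z_d -> algC)
    (theta_U1 : forall l : 'Z_d, `|theta l| = 1)
    (theta_root : forall l : 'Z_d, theta l ^+ d = omega d ^+ (nat_of_ord l)) :
  (exists o : 'Z_d * 'Z_d -> 'Z_d, is_output theta o) /\
  (forall o : 'Z_d * 'Z_d -> 'Z_d, is_output theta o -> ~ has_ncHVM o).
Proof.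
have EA := @E_add d d_prime. have EP := @E_pow d d_prime. have EM := @E_mod d d_prime.
have ZC := @Zd_cast d d_prime. have EZ := E0 d.
pose lam (i : 'Z_d * 'Z_d) := theta i.1 * theta i.2 * theta (- i.1 - i.2).
have lsum (i : 'Z_d * 'Z_d) : l1 i + l2 i + l3 i = 0.
  by rewrite /l1 /l2 /l3; ring.
have eig i a b c : tens3 (Mop theta (l1 i)) (Mop theta (l2 i)) (Mop theta (l3 i)) (@psi d) a b c
   = lam i * psi a b c by rewrite tens_eig.
have lam_pow i : lam i ^+ d = 1.
  rewrite /lam !exprMn !theta_root -!/(E d _) -!EA //.
  have -> : i.1 + i.2 + (- i.1 - i.2) = 0 by ring.
  by rewrite EZ.
have lamE i : exists k : 'Z_d, E d k = lam i.
  have [k Hk] := prim_rootP (@omega_prim d d_prime) (lam_pow i).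
  exists (inZp k); rewrite Hk /E /=.
  have h m : (m %% (Zp_trunc d).+2 = m %% d)%N by rewrite ZC.
  by rewrite h EM.
split.
  exists (fun i => odflt 0 [pick k | E d k == lam i]) => i a b c.
  rewrite eig; case: pickP => [k /eqP Hk|H] /=; first by rewrite -Hk.
  by have [k Hk] := lamE i; have := H k; rewrite Hk eqxx.
move=> o Ho [m1 [m2 [m3 Hm]]].
have psi0 : @psi d 0 0 0 != 0.
  by rewrite /psi eqxx invr_eq0 sqrtC_eq0 pnatr_eq0 -lt0n prime_gt0.
have Eo i : E d (o i) = lam i.
  by apply: (mulIf psi0); have := Ho i 0 0 0; rewrite eig.
have cardZ : #|'Z_d| = d by rewrite card_ord ZC.
set P := \prod_(y : 'Z_d) theta y.
have reidx (F : 'Z_d -> algC) x : \prod_(y : 'Z_d) F (- x - y) = \prod_(y : 'Z_d) F y.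
  symmetry; apply: (reindex_inj (h := fun y => - x - y)).
  by move=> y1 y2 /= H; apply: oppr_inj; apply: (addrI (- x)).
have L x : \prod_(y : 'Z_d) E d (o (x, y)) = E d x * P * P.
  under eq_bigr do rewrite Eo.
  rewrite /lam /= !big_split /= prodr_const cardZ theta_root (reidx theta x).
  by [].
set Q := \prod_(y : 'Z_d) E d (m2 y) * \prod_(y : 'Z_d) E d (m3 y).
have R x : \prod_(y : 'Z_d) E d (o (x, y)) = Q.
  under eq_bigr do rewrite Hm !EA.
  rewrite !big_split /= prodr_const cardZ EP mul1r /l3 /=.
  by rewrite (reidx (fun y => E d (m3 y)) x).
have P0 : P != 0.
  by apply/prodf_neq0 => y _; rewrite -normr_eq0 theta_U1 oner_eq0.
have H0 := L 0; have H1 := L 1; rewrite R in H0 H1.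
have : E d 1 = E d 0.
  by apply: (mulIf P0); apply: (mulIf P0); rewrite -H1 -H0.
by move/eqP; rewrite (negbTE (@E1 d d_prime)).
Qed.
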